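(* Let $\mathbf x=(x_n)_{n\ge0}$ be a sequence over a finite alphabet $\mathcal A$, let $\mathcal A'$ be a proper subset of $\mathcal A$, and suppose there is a sequence $\mathbf y=(y_n)_{n\ge 0}$ over $\mathcal A'$ such that every prefix of $\mathbf y$ is a factor of $\mathbf x$. Let $d\ge 2$. If no sequence in the orbit closure of $\mathbf y$ under the shift is $d$-automatic, then $\mathbf x$ is not $d$-automatic.
   Context: The shift $S$ maps $(z_n)_{n\ge0}$ to $(z_{n+1})_{n\ge 0}$; the orbit closure of $\mathbf y$ is the closure of $\{S^n\mathbf y:n\ge0\}$ in the product topology. A factor of $\mathbf x$ is a finite block $x_ix_{i+1}\cdots x_j$. For $d\ge 2$, a sequence is $d$-automatic if it is the letter-to-letter image of a fixed point of a morphism all of whose letter-images have length $d$. *)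

(* Defs.v *)
From mathcomp Require Import all_boot.
Set Implicit Arguments. Unset Strict Implicit. Unset Printing Implicit Defensive.

Definition shift (T : Type) (z : nat -> T) : nat -> T := fun n => z n.+1.

Definition factor (T : Type) (x : nat -> T) (i m : nat) : seq T :=
  [seq x (i + k) | k <- iota 0 m].

Definition seq_prefix (T : Type) (y : nat -> T) (m : nat) : seq T := factor y 0 m.

Definition is_factor_of (T : Type) (w : seq T) (x : nat -> T) : Prop :=
  exists i, factor x i (size w) = w.

(* Orbit closure of y: closure of { S^n y : n >= 0 } in the product topology
   on T^N (T discrete).  A basic neighbourhood of z is the cylinder fixing
   z_0 .. z_{m-1}, so z is in the closure iff every such cylinder meets the
   orbit. *)
Definition in_orbit_closure (T : Type) (y z : nat -> T) : Prop :=
  forall m : nat, exists n : nat, forall k, k < m -> z k = iter n (@shift T) y k.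

(* d-automatic: letter-to-letter image (tau) of a fixed point w of a
   d-uniform morphism phi on a finite alphabet B.  w = phi(w) means
   w (d*n + j) = j-th letter of phi (w n) for all n and j < d. *)
Definition d_automatic (d : nat) (T : Type) (z : nat -> T) : Prop :=
  exists (B : finType) (phi : B -> d.-tuple B) (w : nat -> B) (tau : B -> T),
    (forall n (j : 'I_d), w (d * n + j) = tnth (phi (w n)) j) /\
    (forall n, z n = tau (w n)).

(* Main.v *)
Require Import Defs.
From mathcomp Require Import all_boot zify.
From Stdlib Require Import Classical.
Set Implicit Arguments. Unset Strict Implicit. Unset Printing Implicit Defensive.

Section Aut.
Variables (B : finType) (d : nat) (phi : B -> d.-tuple B).
Hypothesis d0 : 0 < d.

Definition sel (b : B) (j : nat) : B := nth b (phi b) j.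
Definition fl (b : B) : B := sel b 0.

Fixpoint Phi (k : nat) (b : B) (n : nat) : B :=
  if k is k'.+1 then sel (Phi k' b (n %/ d)) (n %% d) else b.

Lemma Phi_add k m b n : Phi (k + m) b n = Phi m (Phi k b (n %/ d ^ m)) (n %% d ^ m).
Proof.
elim: m n => [|m IH] n; first by rewrite addn0 expn0 divn1 modn1.
rewrite addnS /= IH expnS -divnMA.
have h1 : n %% (d * d ^ m) %% d = n %% d by apply: modn_dvdm; apply: dvdn_mulr.
have h2 : n %% (d * d ^ m) %/ d = n %/ d %% d ^ m by rewrite modn_divl mulnC.
by rewrite h1 h2.
Qed.

Lemma PhiS k b n : Phi k.+1 b n = sel (Phi k b (n %/ d)) (n %% d).
Proof. by []. Qed.

Lemma Phi0 k b : Phi k b 0 = iter k fl b.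
Proof. by elim: k => //= k IH; rewrite div0n mod0n IH. Qed.

Lemma Phi_shift i k b n : n < d ^ k -> Phi (i + k) b n = Phi k (iter i fl b) n.
Proof. by move=> h; rewrite Phi_add divn_small // modn_small // Phi0. Qed.

Lemma Phi_per P c k t n : iter P fl c = c -> n < d ^ k ->
  Phi (t * P + k) c n = Phi k c n.
Proof.
move=> hc hn; elim: t => [|t IH]; first by rewrite mul0n add0n.
rewrite mulSn -addnA Phi_shift ?hc //.
apply: leq_trans hn _; apply: leq_pexp2l => //; exact: leq_addl.
Qed.

Lemma Phi_congr P c k k' n : 0 < P -> iter P fl c = c -> k %% P = k' %% P ->
  n < d ^ k -> n < d ^ k' -> Phi k c n = Phi k' c n.
Proof.
move=> P0 hc.
wlog le : k k' / k <= k'.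
  move=> W hk h1 h2; case: (leqP k k') => h; first exact: W.
  by symmetry; apply: W => //; apply: ltnW.
move=> hk h1 h2.
have hd : P %| k' - k by rewrite -eqn_mod_dvd // hk.
have -> : k' = (k' - k) %/ P * P + k by rewrite divnK // subnK.
by rewrite Phi_per.
Qed.

Lemma w_blocks (w : nat -> B) : (forall n (j : 'I_d), w (d * n + j) = tnth (phi (w n)) j) ->
  forall K q r, r < d ^ K -> w (d ^ K * q + r) = Phi K (w q) r.
Proof.
move=> Hw; elim=> [|K IH] q r hr.
  by move: hr; rewrite expn0 ltnS leqn0 => /eqP ->; rewrite mul1n addn0.
rewrite /= -IH; last by rewrite ltn_divLR // -expnSr.
have -> : d ^ K.+1 * q + r = d * (d ^ K * q + r %/ d) + Ordinal (ltn_pmod r d0).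
  rewrite /= {1}(divn_eq r d) expnS; nia.
by rewrite Hw (tnth_nth (w (d ^ K * q + r %/ d))).
Qed.


Lemma construct (A : Type) (tau : B -> A) (c : B) (P' : nat) :
  1 < d -> iter P'.+1 fl c = c ->
  d_automatic d (fun n => tau (Phi (P'.+1 * n.+1) c n)).
Proof.
move=> d1 hc.
have lt_exp : forall n k, n <= k -> n < d ^ k.
  by move=> n k h; apply: leq_trans (ltn_expl n d1) _; apply: leq_pexp2l.
pose P := P'.+1.
have P0 : 0 < P by [].
pose prv (i : 'I_P) : 'I_P := Ordinal (ltn_pmod (i + P') P0).
exists {ffun 'I_P -> B}.
exists (fun g : {ffun 'I_P -> B} => [tuple [ffun i => sel (g (prv i)) j] | j < d]).
exists (fun n => [ffun i : 'I_P => Phi (P * n.+1 + i) c n]).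
exists (fun g : {ffun 'I_P -> B} => tau (g (Ordinal P0))).
split; last by move=> n; rewrite ffunE /= addn0.
move=> n j; apply/ffunP => i; rewrite tnth_mktuple !ffunE.
have E : P * (d * n + j).+1 + i = (P * (d * n + j) + (P' + i)).+1.
  rewrite /P; nia.
rewrite E PhiS [d * n]mulnC divnMDl // modnMDl divn_small // modn_small // addn0.
congr sel; apply: (Phi_congr P0 hc).
- by rewrite ![P * _]mulnC !modnMDl /= modn_mod addnC.
- apply: lt_exp; rewrite /P; nia.
- apply: lt_exp; rewrite /P; nia.
Qed.

End Aut.

Lemma iter_shift (T : Type) (y : nat -> T) s k : iter s (@shift T) y k = y (s + k).
Proof. by elim: s k => //= s IH k; rewrite /shift IH addnS. Qed.

Lemma iter_per (B : finType) (f : B -> B) b :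
  iter (#|B|`!) f (iter #|B| f b) = iter #|B| f b.
Proof.
pose g (i : 'I_(#|B|.+1)) := iter i f b.
have ninj : ~ injective g.
  by move=> /leq_card; rewrite card_ord ltnn.
have [i [j [hij hne]]] : exists i j, g i = g j /\ i != j.
  apply: NNPP => hn; apply: ninj => i j hij.
  apply/eqP; apply: NNPP => hne; apply: hn; exists i, j; split => //; exact/negP.
wlog lt : i j hij hne / i < j.
  move=> W; case: (ltngtP i j) => h; first exact: (W i j).
  - by apply: (W j i) => //; rewrite eq_sym.
  - by move: hne; rewrite (val_inj h) eqxx.
have hi : (i : nat) <= #|B| by rewrite -ltnS ltn_ord.
have hj : (j : nat) <= #|B| by rewrite -ltnS ltn_ord.
rewrite /g in hij.
move: hij lt hi hj; move: (nat_of_ord i) (nat_of_ord j) => {g ninj hne i j} i j hij lt hi hj.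
move: (#|B|) hi hj => n hi hj.
have hp : j - i %| n`!.
  apply: dvdn_fact; rewrite subn_gt0 lt /=.
  exact: leq_trans (leq_subr i j) hj.
have per : forall t, iter (t * (j - i) + i) f b = iter i f b.
  elim=> [|t IH]; first by [].
  rewrite mulSn -addnA iterD IH -iterD.
  rewrite subnK; last exact: ltnW.
  by [].
have e2 : iter (n`! + i) f b = iter i f b by rewrite -(divnK hp) per.
have e1 : iter n f b = iter (n - i) f (iter i f b) by rewrite -iterD subnK.
rewrite e1 -iterD addnC iterD -(iterD n`! i) e2.
done.
Qed.

Lemma fin_max (B : finType) (R : B -> nat -> Prop) :
  (forall c N N', N <= N' -> R c N -> R c N') -> (forall c, exists N, R c N) ->
  exists M, forall c, R c M.
Proof.
move=> mono ex.
suff [M HM] : exists M, forall c, c \in enum B -> R c M.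
  by exists M => c; apply: HM; rewrite mem_enum.
elim: (enum B) => [|a s [M HM]]; first by exists 0.
have [N HN] := ex a.
exists (maxn M N) => c; rewrite inE => /orP [/eqP -> | hc].
  by apply: mono HN; apply: leq_maxr.
by apply: mono (HM c hc); apply: leq_maxl.
Qed.

Lemma prefix_lemma (T : Type) (x y : nat -> T) m :
  is_factor_of (seq_prefix y m) x -> exists i, forall k, k < m -> x (i + k) = y k.
Proof.
move=> [i Hi]; exists i => k hk.
move: Hi; rewrite /seq_prefix /factor size_map size_iota => Hi.
have := congr1 (fun s => nth (x 0) s k) Hi.
by rewrite /= !(nth_map 0) ?size_iota // nth_iota.
Qed.

Unset Implicit Arguments.

Theorem mainTheorem13 (A : finType) (A' : {set A}) (x y : nat -> A) (d : nat) :
  A' \proper [set: A] ->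
  (forall n, y n \in A') ->
  (forall m, is_factor_of (seq_prefix y m) x) ->
  2 <= d ->
  (forall z : nat -> A, in_orbit_closure y z -> ~ d_automatic d z) ->
  ~ d_automatic d x.
Proof.
move=> _ _ Hpre d2 Hz [B [phi [w [tau [Hw Hx]]]]].
have d0 : 0 < d by apply: ltnW.
have lt_exp : forall n k, n <= k -> n < d ^ k.
  by move=> n k h; apply: leq_trans (ltn_expl n d2) _; apply: leq_pexp2l.
pose S K b := exists s, forall r, r < d ^ K -> tau (Phi phi K b r) = y (s + r).
have step1 : forall K, exists b, S K b.
  move=> K; have [i Hi] := @prefix_lemma _ x y _ (Hpre (2 * d ^ K)).
  have D0 : 0 < d ^ K by rewrite expn_gt0 d0.
  move: Hi; set D := d ^ K => Hi.
  have h1 := divn_eq i D; have h2 := ltn_pmod i D0.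
  move: h1 h2; set q := i %/ D; set m := i %% D => h1 h2.
  exists (w (q + 1)), (D * (q + 1) - i) => r hr.
  have e : i + (D * (q + 1) - i + r) = D * (q + 1) + r by nia.
  rewrite -Hi; last by nia.
  by rewrite e Hx (w_blocks d0 Hw).
have [P' eP] : exists P', #|B|`! = P'.+1 by exists (#|B|`!).-1; rewrite prednK // fact_gt0.
pose f := fl phi.
have per : forall b, iter P'.+1 f (iter #|B| f b) = iter #|B| f b.
  by move=> b; rewrite -eP iter_per.
pose Q N c := iter P'.+1 f c = c /\ S (P'.+1 * N) c.
have ex2 : forall N, exists c, Q N c.
  move=> N; have [b [s Hs]] := step1 (#|B| + P'.+1 * N).
  exists (iter #|B| f b); split; first exact: per.
  exists s => r hr; rewrite -(Phi_shift phi) //; apply: Hs.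
  apply: leq_trans hr _; apply: leq_pexp2l => //; exact: leq_addl.
have mono : forall c N N', N <= N' -> ~ Q N c -> ~ Q N' c.
  move=> c N N' hN hn [hc [s Hs]]; apply: hn; split => //; exists s => r hr.
  have e : P'.+1 * N' = (N' - N) * P'.+1 + P'.+1 * N by nia.
  rewrite -(Phi_per d0 (N' - N) hc hr) -e; apply: Hs.
  apply: leq_trans hr _; apply: leq_pexp2l => //; nia.
have [c Hc] : exists c, forall N, Q N c.
  apply: NNPP => hn.
  have [M HM] := @fin_max B (fun c N => ~ Q N c) mono
    (fun c => not_all_ex_not _ _ (fun hall => hn (ex_intro _ c hall))).
  by have [c hc] := ex2 M; apply: (HM c).
have hc : iter P'.+1 f c = c by case: (Hc 0).
apply: (Hz (fun n => tau (Phi phi (P'.+1 * n.+1) c n))); last first.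
  exact: construct.
move=> m; have [_ [s Hs]] := Hc m; exists s => k hk.
rewrite iter_shift -Hs; last by apply: lt_exp; nia.
congr tau; apply: (Phi_congr d0 _ hc) => //.
- by rewrite !modnMr.
- by apply: lt_exp; nia.
- by apply: lt_exp; nia.
Qed.
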